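(* Let $G=G_1\vee G_2$ be the join of two cographs $G_1,G_2$ (so $G$ is a connected cograph with at least two vertices). Define $D^*=\{w\}$ if there is a vertex $w\in V(G)$ with $N[w]=V(G)$ (choose one such $w$), and otherwise $D^*=\{x,y\}$ for an arbitrary choice of $x\in V(G_1)$ and $y\in V(G_2)$. Then $D^*$ is a minimum dominating set of $G$, and for every dominating set $D$ of $G$ we have $D\leftrightarrow_{|D|+1} D^*$.
   Context: All graphs are finite, simple and undirected. The join $G_1\vee G_2$ of vertex-disjoint graphs has vertex set $V(G_1)\cup V(G_2)$ and edge set $E(G_1)\cup E(G_2)\cup\{vw: v\in V(G_1), w\in V(G_2)\}$. Cographs are defined recursively: a single vertex is a cograph, and the disjoint union and the join of two cographs are cographs. $N[w]$ denotes the closed neighbourhood of $w$. A set $D\subseteq V(G)$ is a dominating set if every vertex of $G$ is in $D$ or adjacent to a vertex of $D$. Two dominating sets $D,D'$ are adjacent if $|D\triangle D'|=1$. For dominating sets $D_p,D_q$ and an integer $k>0$, write $D_p\leftrightarrow_k D_q$ if there is a sequence $D_0=D_p,\dots,D_\ell=D_q$ ($\ell\ge0$) of dominating sets of $G$ with consecutive sets adjacent and $|D_i|\le k$ for all $i$. *)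

(* Defs.v *)
From mathcomp Require Import all_boot.
Set Implicit Arguments. Unset Strict Implicit. Unset Printing Implicit Defensive.

Definition simple_graph (T : finType) (e : rel T) : Prop :=
  symmetric e /\ irreflexive e.

(* cograph_on e A : the subgraph of (T,e) induced on A is a cograph
   (recursive definition: single vertex, disjoint union, join). *)
Inductive cograph_on (T : finType) (e : rel T) : {set T} -> Prop :=
| cograph_single (x : T) : cograph_on e [set x]
| cograph_union (A B : {set T}) :
    [disjoint A & B] -> cograph_on e A -> cograph_on e B ->
    (forall a b, a \in A -> b \in B -> ~~ e a b) ->
    cograph_on e (A :|: B)
| cograph_join (A B : {set T}) :
    [disjoint A & B] -> cograph_on e A -> cograph_on e B ->
    (forall a b, a \in A -> b \in B -> e a b) ->
    cograph_on e (A :|: B).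

Definition is_join_of_cographs (T : finType) (e : rel T) (V1 V2 : {set T}) : Prop :=
  [/\ [disjoint V1 & V2], V1 :|: V2 = [set: T],
      cograph_on e V1, cograph_on e V2 &
      (forall a b, a \in V1 -> b \in V2 -> e a b)].

Definition closed_nbhd (T : finType) (e : rel T) (w : T) : {set T} :=
  [set v | (v == w) || e w v].

Definition dominating (T : finType) (e : rel T) (D : {set T}) : bool :=
  [forall v, (v \in D) || [exists u in D, e u v]].

Definition min_dominating (T : finType) (e : rel T) (D : {set T}) : Prop :=
  dominating e D /\ forall D', dominating e D' -> #|D| <= #|D'|.

Definition symdiff (T : finType) (A B : {set T}) : {set T} := (A :\: B) :|: (B :\: A).

Definition ds_adjacent (T : finType) (D D' : {set T}) : bool := #|symdiff D D'| == 1.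

Definition reconf (T : finType) (e : rel T) (k : nat) (Dp Dq : {set T}) : Prop :=
  exists s : seq {set T},
    [/\ path (@ds_adjacent T) Dp s, last Dp s = Dq &
        all (fun D => dominating e D && (#|D| <= k)) (Dp :: s)].

(* Main.v *)
Require Import Defs.
From mathcomp Require Import all_boot.

Set Implicit Arguments. Unset Strict Implicit.
Section Aux.
Variables (T : finType) (e : rel T).

Lemma reconf_refl k A : dominating e A -> #|A| <= k -> reconf e k A A.
Proof. by move=> HA Hk; exists [::]; split => //=; rewrite HA Hk. Qed.

Lemma reconf_trans k A B C : reconf e k A B -> reconf e k B C -> reconf e k A C.
Proof.
move=> [s1 [p1 l1 a1]] [s2 [p2 l2 a2]]; exists (s1 ++ s2); split.
- by rewrite cat_path p1 l1.
- by rewrite last_cat l1.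
- move: a1 a2; rewrite -cat_cons all_cat => -> /=; by case/andP.
Qed.

Lemma reconf_step k A B : ds_adjacent A B -> dominating e A -> dominating e B ->
  #|A| <= k -> #|B| <= k -> reconf e k A B.
Proof. by move=> H HA HB hA hB; exists [:: B]; split => //=; rewrite ?H ?HA ?HB ?hA ?hB. Qed.

Lemma adj_add (A : {set T}) b : b \notin A -> ds_adjacent A (b |: A).
Proof.
move=> Hb; rewrite /ds_adjacent (_ : symdiff _ _ = [set b]) ?cards1 //.
apply/setP=> v; rewrite !inE; case: (eqVneq v b) => [->|] /=; first by rewrite (negbTE Hb).
by case: (v \in A).
Qed.

Lemma adj_sym (A B : {set T}) : ds_adjacent A B = ds_adjacent B A.
Proof. by rewrite /ds_adjacent /symdiff setUC. Qed.

Lemma dom_mono (A B : {set T}) : A \subset B -> dominating e A -> dominating e B.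
Proof.
move=> sAB /forallP H; apply/forallP=> v; case/orP: (H v) => [vA | /existsP [u /andP [uA euv]]].
  by rewrite (subsetP sAB).
by apply/orP; right; apply/existsP; exists u; rewrite (subsetP sAB u uA) euv.
Qed.

Lemma down k n : forall (A B : {set T}), #|B :\: A| = n -> A \subset B -> dominating e A ->
  #|B| <= k -> reconf e k B A.
Proof.
elim: n => [|n IH] A B Hn sAB HA Hk.
  have sBA : B \subset A by rewrite -setD_eq0 -cards_eq0 Hn.
  have EBA : B = A by apply/eqP; rewrite eqEsubset sBA sAB.
  rewrite EBA in Hk *.
  by apply: reconf_refl.
have : 0 < #|B :\: A| by rewrite Hn.
case/card_gt0P => b; rewrite inE => /andP [bA bB].
have HB' : #|(B :\ b) :\: A| = n.
  have := cardsD1 b (B :\: A); rewrite inE bA bB Hn /= add1n => -[->].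
  by apply: eq_card => v; rewrite !inE; case: (v == b); case: (v \in A).
have sAB' : A \subset B :\ b.
  apply/subsetP => v vA; rewrite !inE (subsetP sAB _ vA) andbT.
  by apply/eqP => vb; rewrite -vb vA in bA.
have hB' : #|B :\ b| <= k by apply: leq_trans Hk; apply: subset_leq_card; apply: subD1set.
apply: reconf_trans (IH _ _ HB' sAB' HA hB').
have dB' := dom_mono sAB' HA.
apply: reconf_step => //; last exact: dom_mono sAB HA.
rewrite adj_sym -{2}(setD1K bB); apply: adj_add; by rewrite !inE eqxx.
Qed.

Lemma up k n : forall (A B : {set T}), #|B :\: A| = n -> A \subset B -> dominating e A ->
  #|B| <= k -> reconf e k A B.
Proof.
elim: n => [|n IH] A B Hn sAB HA Hk.
  have sBA : B \subset A by rewrite -setD_eq0 -cards_eq0 Hn.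
  have EBA : B = A by apply/eqP; rewrite eqEsubset sBA sAB.
  rewrite EBA in Hk *.
  by apply: reconf_refl.
have : 0 < #|B :\: A| by rewrite Hn.
case/card_gt0P => b; rewrite inE => /andP [bA bB].
have HB' : #|B :\: (b |: A)| = n.
  have := cardsD1 b (B :\: A); rewrite inE bA bB Hn /= add1n => -[->].
  by apply: eq_card => v; rewrite !inE; case: (v == b); case: (v \in A).
have sAB' : b |: A \subset B by rewrite subUset sub1set bB sAB.
have dA' : dominating e (b |: A) by apply: dom_mono HA; apply: subsetUr.
apply: reconf_trans (IH _ _ HB' sAB' dA' Hk).
apply: reconf_step => //; first exact: adj_add.
  by apply: leq_trans Hk; apply: subset_leq_card.
by apply: leq_trans Hk; apply: subset_leq_card.
Qed.

Lemma downk k (A B : {set T}) : A \subset B -> dominating e A -> #|B| <= k -> reconf e k B A.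
Proof. exact: down. Qed.
Lemma upk k (A B : {set T}) : A \subset B -> dominating e A -> #|B| <= k -> reconf e k A B.
Proof. exact: up. Qed.

End Aux.

Theorem lemma6 (T : finType) (e : rel T) (V1 V2 : {set T}) :
  simple_graph e ->
  is_join_of_cographs e V1 V2 ->
  forall Dstar : {set T},
    (if [exists w, closed_nbhd e w == [set: T]]
     then exists w, closed_nbhd e w = [set: T] /\ Dstar = [set w]
     else exists x y, [/\ x \in V1, y \in V2 & Dstar = [set x; y]]) ->
    min_dominating e Dstar /\
    (forall D : {set T}, dominating e D -> reconf e (#|D| + 1) D Dstar).
Proof.
move=> [esym eirr] [dis cov _ _ ejoin] Ds.
have dom2 : forall (A : {set T}) u v, u \in V1 -> v \in V2 -> u \in A -> v \in A -> dominating e A.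
  move=> A u v uV vV uA vA; apply/forallP=> t.
  have : t \in V1 :|: V2 by rewrite cov inE.
  rewrite inE; case/orP=> tV; apply/orP; right; apply/existsP.
    by exists v; rewrite vA /= esym; apply: ejoin.
  by exists u; rewrite uA /=; apply: ejoin.
have nonempty : forall (D : {set T}) (t : T), dominating e D -> exists u : T, u \in D.
  move=> D t; rewrite /dominating => /forallP H; case/orP: (H t) => [tD|/existsP [u /andP [uD _]]]; by eauto.
have sing : forall u, dominating e [set u] -> closed_nbhd e u = [set: T].
  move=> u /forallP H; apply/setP=> v; rewrite !inE; have := H v; rewrite inE.
  case/orP => [->//|/existsP [u' /andP[]]]; rewrite inE => /eqP -> ->; exact: orbT.
case: ifP => Hex; [move=> [w [Hw ->]] | move=> [x [y [xV1 yV2 ->]]]].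
  have dw : dominating e [set w].
    apply/forallP=> v; have : v \in closed_nbhd e w by rewrite Hw inE.
    rewrite !inE => /orP [->|ewv] //.
    by apply/orP; right; apply/existsP; exists w; rewrite !inE eqxx ewv.
  split.
    split => // D' HD'; rewrite cards1; have [u uD] := nonempty D' w HD'.
    by apply/card_gt0P; exists u.
  move=> D HD.
  apply: (reconf_trans (B := w |: D)).
    apply: upk => //; first exact: subsetUr.
    by rewrite cardsU1 addnC leq_add2l leq_b1.
  apply: downk => //; first by rewrite sub1set setU11.
  by rewrite cardsU1 addnC leq_add2l leq_b1.
have dxy : dominating e [set x; y] by apply: (dom2 _ x y) => //; rewrite !inE eqxx ?orbT.
have two : forall D, dominating e D -> 2 <= #|D|.
  move=> D HD; rewrite ltnNge; apply/negP => H1.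
  have [u uD] := nonempty D x HD.
  have : #|D| == 1 by rewrite eqn_leq H1; apply/card_gt0P; exists u.
  case/cards1P => v Dv; rewrite Dv in HD.
  have := sing v HD => Hv.
  suff : [exists w, closed_nbhd e w == [set: T]] by rewrite Hex.
  by apply/existsP; exists v; rewrite Hv.
have c2 : #|[set x; y]| <= 2 by rewrite cards2; case: (x != y).
split.
  split => // D' HD'; apply: leq_trans c2 (two _ HD').
move=> D HD.
have [z zD] := nonempty D x HD.
have [a [axy daz]] : exists a, a \in [set x; y] /\ dominating e [set a; z].
  have : z \in V1 :|: V2 by rewrite cov inE.
  rewrite inE => /orP [zV|zV].
    by exists y; split; [rewrite !inE eqxx orbT | apply: (dom2 _ z y); rewrite ?inE ?eqxx ?orbT].
  by exists x; split; [rewrite !inE eqxx | apply: (dom2 _ x z); rewrite ?inE ?eqxx ?orbT].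
have hD := two _ HD.
have c3 : #|z |: [set x; y]| <= #|D| + 1.
  rewrite cardsU1; apply: leq_trans (_ : 1 + 2 <= _); first by apply: leq_add => //; apply: leq_b1.
  by rewrite addnC leq_add2r.
apply: (reconf_trans (B := a |: D)).
  apply: upk => //; first exact: subsetUr.
  by rewrite cardsU1 addnC leq_add2l leq_b1.
apply: (reconf_trans (B := [set a; z])).
  apply: downk => //; last by rewrite cardsU1 addnC leq_add2l leq_b1.
  by rewrite subUset !sub1set !inE eqxx zD orbT.
apply: (reconf_trans (B := z |: [set x; y])).
  apply: upk => //.
  apply/subsetP => v; rewrite !inE => /orP [/eqP -> | /eqP ->]; last by rewrite eqxx.
  by move: axy; rewrite !inE => ->; rewrite orbT.
apply: downk => //; exact: subsetUr.
Qed.
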